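(* Let $\Omega$ be a finite set and let $\mathcal{F}_{+}$ denote the set of nonnegative, increasing set functions $f:2^{\Omega}\to\mathbb{R}$. Let $\zeta:\mathcal{F}_{+}\to\mathbb{R}$ be any one of the following: (I) $\zeta[f]=\mathcal{E}[f]$; (II) $\zeta[f]=D[f]$; (III) $\zeta[f]=d^{\ell,k}[f]$ for some fixed $\ell\in\{0,\dots,|\Omega|-1\}$, $k\in\{0,\dots,|\Omega|\}$; (IV) $\zeta[f]=\Delta^{L,K}[f]$ for some fixed $L\in\{0,\dots,|\Omega|-1\}$, $K\in\{1,\dots,|\Omega|\}$. Then: (i) $\zeta$ is sublinear: for all $f_1,f_2\in\mathcal{F}_{+}$, $\zeta[f_1]+\zeta[f_2]\ge\zeta[f_1+f_2]$, and for all $f\in\mathcal{F}_{+}$ and $\alpha\in\mathbb{R}_{+}$, $\alpha\zeta[f]=\zeta[\alpha f]$. (ii) In cases (I), (II), (III): if $f\in\mathcal{F}_{+}$ is not submodular, then for any $\epsilon\in[0,\zeta[f])$ there does not exist a nonnegative, increasing, submodular function $g:2^{\Omega}\to\mathbb{R}$ with $\|g-f\|_{\infty}<\epsilon/4$.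
   Context: A set function $f$ is increasing if $f(\mathcal{A})\le f(\mathcal{B})$ whenever $\mathcal{A}\subseteq\mathcal{B}$; it is submodular if $f(\mathcal{A}\cup\mathcal{B})+f(\mathcal{A}\cap\mathcal{B})\le f(\mathcal{A})+f(\mathcal{B})$ for all $\mathcal{A},\mathcal{B}\subseteq\Omega$. Definitions: $\mathcal{E}[f]=\max_{\mathcal{A},\mathcal{B}\subseteq\Omega} f(\mathcal{A}\cup\mathcal{B})+f(\mathcal{A}\cap\mathcal{B})-f(\mathcal{A})-f(\mathcal{B})$. For $\ell\in\{0,\dots,|\Omega|-1\}$, $k\in\{0,\dots,|\Omega|\}$, $d^{\ell,k}[f]=\max\{f(\mathcal{A}\cup\mathcal{B}\cup\{s\})-f(\mathcal{A}\cup\mathcal{B})-f(\mathcal{A}\cup\{s\})+f(\mathcal{A}) : \mathcal{A},\mathcal{B}\subseteq\Omega, s\in\Omega, |\mathcal{A}|=\ell,|\mathcal{B}|=k\}$. $D[f]=\max\{d^{\ell,k}[f]:\ell\in\{0,\dots,|\Omega|-1\},k\in\{0,\dots,|\Omega|\}\}$. For $K\in\{1,\dots,|\Omega|\}$, $\delta^{\ell,K}[f]=\sum_{k=0}^{K-1}d^{\ell,k}[f]$, and $\Delta^{L,K}[f]=\max_{\ell\in\{0,\dots,L\}}\delta^{\ell,K}[f]$. $\|h\|_\infty=\max_{\mathcal{S}\subseteq\Omega}|h(\mathcal{S})|$. *)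

(* Defs.v *)
From HB Require Import structures.
From mathcomp Require Import all_boot all_order all_algebra.
From mathcomp Require Import reals.
Set Implicit Arguments. Unset Strict Implicit. Unset Printing Implicit Defensive.
Import Order.TTheory GRing.Theory Num.Theory.
Local Open Scope ring_scope.

Section SetFun.
Variables (R : realType) (T : finType).

Definition setfun := {set T} -> R.

(* maximum of F over the (finite) index set {i | P i}; 0 if that set is empty
   (this default is only used for empty index sets). *)
Definition fmax (I : finType) (P : pred I) (F : I -> R) : R :=
  match [pick i | P i] with
  | Some i0 => \big[Num.max/F i0]_(i | P i) F i
  | None => 0
  end.

Definition nonnegf (f : setfun) : Prop := forall S, 0 <= f S.
Definition increasing (f : setfun) : Prop :=
  forall A B : {set T}, A \subset B -> f A <= f B.
Definition submodular (f : setfun) : Prop :=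
  forall A B : {set T}, f (A :|: B) + f (A :&: B) <= f A + f B.

Definition Emod (f : setfun) : R :=
  fmax (fun _ : {set T} * {set T} => true)
       (fun p => f (p.1 :|: p.2) + f (p.1 :&: p.2) - f p.1 - f p.2).

Definition dlk (l k : nat) (f : setfun) : R :=
  fmax (fun p : {set T} * {set T} * T => (#|p.1.1| == l) && (#|p.1.2| == k))
       (fun p => let: (A, B, s) := p in
          f (A :|: B :|: [set s]) - f (A :|: B) - f (A :|: [set s]) + f A).

Definition Dmax (f : setfun) : R :=
  fmax (fun _ : 'I_#|T| * 'I_#|T|.+1 => true)
       (fun p => dlk p.1 p.2 f).

Definition deltalK (l K : nat) (f : setfun) : R :=
  \sum_(k < K) dlk l k f.

Definition DeltaLK (L K : nat) (f : setfun) : R :=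
  fmax (fun _ : 'I_L.+1 => true) (fun l => deltalK l K f).

Definition supnorm (h : setfun) : R :=
  fmax (fun _ : {set T} => true) (fun S => `|h S|).

End SetFun.

Inductive zeta_choice :=
  | ZE
  | ZD
  | Zd of nat & nat
  | ZDelta of nat & nat.

Definition zeta_valid (T : finType) (z : zeta_choice) : Prop :=
  match z with
  | ZE | ZD => True
  | Zd l k => (l < #|T|)%N /\ (k <= #|T|)%N
  | ZDelta L K => (L < #|T|)%N /\ (1 <= K)%N /\ (K <= #|T|)%N
  end.

Definition zeta (R : realType) (T : finType) (z : zeta_choice)
  (f : {set T} -> R) : R :=
  match z with
  | ZE => Emod f
  | ZD => Dmax f
  | Zd l k => dlk l k f
  | ZDelta L K => DeltaLK L K f
  end.

Definition not_Delta (z : zeta_choice) : Prop :=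
  match z with ZDelta _ _ => False | _ => True end.

(* Main.v *)
Require Import Defs.
From HB Require Import structures.
From mathcomp Require Import all_boot all_order all_algebra.
From mathcomp Require Import reals.
From mathcomp Require Import lra.
Import Order.TTheory GRing.Theory Num.Theory.
Set Implicit Arguments. Unset Strict Implicit.
Local Open Scope ring_scope.

Section Aux.
Variable R : realType.

Lemma fmax_ge (I : finType) (P : pred I) (F : I -> R) j :
  P j -> F j <= fmax P F.
Proof.
move=> Pj; rewrite /fmax; case: pickP => [i0 Pi0|]; last by move/(_ j); rewrite Pj.
by rewrite (bigD1 j) //= le_max lexx.
Qed.

Lemma fmax_att (I : finType) (P : pred I) (F : I -> R) :
  (exists2 i, P i & fmax P F = F i) \/ ((forall i, ~~ P i) /\ fmax P F = 0).
Proof.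
rewrite /fmax; case: pickP => [i0 Pi0|H]; last by right; split=> // i; rewrite H.
left; apply: (big_ind (fun x => exists2 i, P i & x = F i)).
- by exists i0.
- move=> x y [i Pi ->] [j Pj ->]; case: (leP (F i) (F j)) => _.
  + by exists j.
  + by exists i.
- by move=> i Pi; exists i.
Qed.

Lemma fmax_sub (I : finType) (P : pred I) (F G H : I -> R) :
  (forall i, P i -> H i <= F i + G i) -> fmax P H <= fmax P F + fmax P G.
Proof.
move=> hle; case: (fmax_att P H) => [[i Pi ->]|[nP ->]].
  by apply: le_trans (hle _ Pi) _; apply: lerD; apply: fmax_ge.
case: (fmax_att P F) => [[i Pi _]|[_ ->]]; first by move: (nP i); rewrite Pi.
case: (fmax_att P G) => [[i Pi _]|[_ ->]]; first by move: (nP i); rewrite Pi.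
by rewrite addr0.
Qed.

Lemma fmax_le (I : finType) (P : pred I) (F : I -> R) c :
  (forall i, P i -> F i <= c) -> 0 <= c -> fmax P F <= c.
Proof.
move=> h c0; case: (fmax_att P F) => [[i Pi ->]|[_ ->]] //; exact: h.
Qed.

Lemma fmax_scale (I : finType) (P : pred I) (F H : I -> R) a :
  0 <= a -> (forall i, P i -> H i = a * F i) -> a * fmax P F = fmax P H.
Proof.
move=> a0 hH; case: (fmax_att P F) => [[i Pi eF]|[nP ->]]; last first.
  case: (fmax_att P H) => [[j Pj _]|[_ ->]]; first by move: (nP j); rewrite Pj.
  by rewrite mulr0.
rewrite eF.
  apply/eqP; rewrite eq_le; apply/andP; split.
    by rewrite -hH //; apply: fmax_ge.
  case: (fmax_att P H) => [[j Pj ->]|[nP' ->]].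
    by rewrite hH // ler_wpM2l // -eF; apply: fmax_ge.
  by move: (nP' i); rewrite Pi.
Qed.
End Aux.

From mathcomp Require Import ring.

Section Main.
Variables (R : realType) (T : finType).
Implicit Types (f g : {set T} -> R).

Lemma dlk_sub l k f1 f2 :
  dlk l k (fun S => f1 S + f2 S) <= dlk l k f1 + dlk l k f2.
Proof. by apply: fmax_sub => -[[A B] s] _ /=; lra. Qed.

Lemma dlk_scale l k f a : 0 <= a ->
  a * dlk l k f = dlk l k (fun S => a * f S).
Proof. by move=> a0; apply: fmax_scale => // -[[A B] s] _ /=; ring. Qed.

Lemma Emod_sub f1 f2 :
  Emod (fun S => f1 S + f2 S) <= Emod f1 + Emod f2.
Proof. by apply: fmax_sub => -[A B] _ /=; lra. Qed.

Lemma Emod_scale f a : 0 <= a ->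
  a * Emod f = Emod (fun S => a * f S).
Proof. by move=> a0; apply: fmax_scale => // -[A B] _ /=; ring. Qed.

Lemma Dmax_sub f1 f2 :
  Dmax (fun S => f1 S + f2 S) <= Dmax f1 + Dmax f2.
Proof. by apply: fmax_sub => -[l k] _ /=; apply: dlk_sub. Qed.

Lemma Dmax_scale f a : 0 <= a ->
  a * Dmax f = Dmax (fun S => a * f S).
Proof. by move=> a0; apply: fmax_scale => // -[l k] _ /=; rewrite dlk_scale. Qed.

Lemma deltalK_sub l K f1 f2 :
  deltalK l K (fun S => f1 S + f2 S) <= deltalK l K f1 + deltalK l K f2.
Proof. by rewrite /deltalK -big_split /=; apply: ler_sum => k _; apply: dlk_sub. Qed.

Lemma deltalK_scale l K f a : 0 <= a ->
  a * deltalK l K f = deltalK l K (fun S => a * f S).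
Proof. by move=> a0; rewrite /deltalK mulr_sumr; apply: eq_bigr => k _; rewrite dlk_scale. Qed.

Lemma DeltaLK_sub L K f1 f2 :
  DeltaLK L K (fun S => f1 S + f2 S) <= DeltaLK L K f1 + DeltaLK L K f2.
Proof. by apply: fmax_sub => l _; apply: deltalK_sub. Qed.

Lemma DeltaLK_scale L K f a : 0 <= a ->
  a * DeltaLK L K f = DeltaLK L K (fun S => a * f S).
Proof. by move=> a0; apply: fmax_scale => // l _; rewrite deltalK_scale. Qed.

Section Approx.
Variables (f g : {set T} -> R).
Hypotheses (incg : increasing g) (subg : submodular g).
Let s := supnorm (fun S => g S - f S).
Lemma s_bound S : - s <= g S - f S <= s.
Proof. by rewrite -ler_norml; apply: (fmax_ge (P := fun _ => true) (fun S => `|g S - f S|)). Qed.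
Lemma s_ge0 : 0 <= s.
Proof. by apply: le_trans (fmax_ge (P := fun _ => true) (fun S => `|g S - f S|) (j := set0) _). Qed.

Lemma Emod_bound : Emod f <= 4 * s.
Proof.
apply: fmax_le; last by have := s_ge0; lra.
move=> [A B] _ /=; have := subg A B.
move: (s_bound (A :|: B)) (s_bound (A :&: B)) (s_bound A) (s_bound B).
move=> /andP[? ?] /andP[? ?] /andP[? ?] /andP[? ?]; lra.
Qed.

Lemma dlk_bound l k : dlk l k f <= 4 * s.
Proof.
apply: fmax_le; last by have := s_ge0; lra.
move=> [[A B] x] _ /=.
have := subg (A :|: B) (A :|: [set x]).
have -> : (A :|: B) :|: (A :|: [set x]) = A :|: B :|: [set x].
  apply/setP=> y; rewrite !inE.
  by case: (y \in A); case: (y \in B); case: (y == x).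
have := incg (B := (A :|: B) :&: (A :|: [set x])) (A := A).
rewrite subsetI !subsetUl => /(_ isT).
move: (s_bound (A :|: B :|: [set x])) (s_bound (A :|: B)) (s_bound (A :|: [set x])) (s_bound A).
move=> /andP[? ?] /andP[? ?] /andP[? ?] /andP[? ?]; lra.
Qed.

Lemma Dmax_bound : Dmax f <= 4 * s.
Proof.
apply: fmax_le; last by have := s_ge0; lra.
by move=> [l k] _; apply: dlk_bound.
Qed.
End Approx.

End Main.

Theorem mainTheorem1 (R : realType) (T : finType) (z : zeta_choice) :
  zeta_valid T z ->
  (* (i) sublinearity on F_+ *)
  (forall f1 f2 : {set T} -> R,
      nonnegf f1 -> increasing f1 -> nonnegf f2 -> increasing f2 ->
      zeta z (fun S => f1 S + f2 S) <= zeta z f1 + zeta z f2) /\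
  (forall (f : {set T} -> R) (a : R),
      nonnegf f -> increasing f -> 0 <= a ->
      a * zeta z f = zeta z (fun S => a * f S)) /\
  (* (ii) for cases (I), (II), (III) *)
  (not_Delta z ->
   forall f : {set T} -> R,
     nonnegf f -> increasing f -> ~ submodular f ->
     forall eps : R, 0 <= eps -> eps < zeta z f ->
     ~ (exists g : {set T} -> R,
          [/\ nonnegf g, increasing g, submodular g &
              supnorm (fun S => g S - f S) < eps / 4])).
Proof.
move=> _; split; last split.
- move=> f1 f2 _ _ _ _; case: z => /=.
  + exact: Emod_sub.
  + exact: Dmax_sub.
  + by move=> l k; apply: dlk_sub.
  + by move=> L K; apply: DeltaLK_sub.
- move=> f a _ _ a0; case: z => /=.
  + exact: Emod_scale.
  + exact: Dmax_scale.
  + by move=> l k; apply: dlk_scale.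
  + by move=> L K; apply: DeltaLK_scale.
- move=> nD f _ _ _ eps e0 ez [g [_ incg subg hs]].
  have hb : zeta z f <= 4 * supnorm (fun S => g S - f S).
    case: z nD ez => //= [_ _|_ _|l k _ _].
    + exact: Emod_bound.
    + exact: Dmax_bound.
    + exact: dlk_bound.
  move: hs hb ez; set s := supnorm _; set zf := zeta z f => hs hb ez.
  have : 4 * s < eps by rewrite -ltr_pdivlMl // mulrC.
  by move=> h; have := le_lt_trans hb h; rewrite ltNge (ltW ez).
Qed.
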